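(* There exists an absolute constant $C>0$ such that the following holds. Let $\mathcal J$ be a joint distribution of $(p_1,p_2,y)\in[0,1]\times[0,1]\times\{0,1\}$, let $\mathcal D_1$ be the distribution of $(p_1,y)$ and $\mathcal D_2$ the distribution of $(p_2,y)$. Then for every positive integer $m$, $$|\mathsf{SCDL}_m(\mathcal D_1)-\mathsf{SCDL}_m(\mathcal D_2)|\le C\,m\,\mathbb E_{\mathcal J}|p_1-p_2|.$$
   Context: For $x\in\mathbb R$ write $x_+=\max\{x,0\}$. For a distribution $\mathcal D$ of $(p,y)\in[0,1]\times\{0,1\}$, a positive integer $m$ and $i\in\{0,\ldots,m\}$, let $w_i(p)=(1-|mp-i|)_+$, $\pi_i=\mathbb E_{\mathcal D}[w_i(p)]$ and $q_i=\mathbb E_{\mathcal D}[w_i(p)y]/\pi_i$ (terms with $\pi_i=0$ are $0$). Define $$\mathsf{SCDL}_m(\mathcal D)=\max_{i=0,\ldots,m}\Big(\sum_{j=0}^{i}\pi_j\big(q_j-\tfrac{i+1}{m}\big)_+ +\sum_{j=i+1}^{m}\pi_j\big(\tfrac im-q_j\big)_+\Big).$$ *)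

(* Defs.v *)
From HB Require Import structures.
From mathcomp Require Import all_boot all_order all_algebra.
From mathcomp Require Import all_classical all_reals all_analysis.
Set Implicit Arguments. Unset Strict Implicit. Unset Printing Implicit Defensive.
Import Order.TTheory GRing.Theory Num.Theory.
Local Open Scope ring_scope.


(* A distribution D of (p,y) is represented as the law of a pair of random
   variables (p, y) on a probability space (T, P).  Expectation = real integral. *)
Definition Exp (R : realType) d (T : measurableType d) (P : probability T R) (f : T -> R) : R :=
  Rintegral P setT f.

Definition pos_part {R : realType} (x : R) : R := Num.max x 0.

Definition wgt (m i : nat) {R : realType} (p : R) : R := pos_part (1 - `|m%:R * p - i%:R|).

Definition pi_ (R : realType) d (T : measurableType d) (P : probability T R) (p : T -> R)
  (m i : nat) : R := Exp P (fun t => wgt m i (p t)).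

Definition q_ (R : realType) d (T : measurableType d) (P : probability T R) (p y : T -> R)
  (m i : nat) : R :=
  if pi_ P p m i == 0 then 0
  else Exp P (fun t => wgt m i (p t) * y t) / pi_ P p m i.

(* SCDL_m(D) = max_{i=0..m} ( sum_{j<=i} pi_j (q_j - (i+1)/m)_+
                             + sum_{j>i} pi_j (i/m - q_j)_+ ).
   All candidate values are >= 0, so folding max from 0 is the max over i. *)
Definition SCDL (R : realType) d (T : measurableType d) (P : probability T R) (p y : T -> R)
  (m : nat) : R :=
  \big[Num.max/0]_(i < m.+1)
    ( \sum_(j < m.+1 | (j <= i)%N)
         pi_ P p m j * pos_part (q_ P p y m j - (i.+1)%:R / m%:R)
    + \sum_(j < m.+1 | (i < j)%N)
         pi_ P p m j * pos_part (i%:R / m%:R - q_ P p y m j)).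

(* Main.v *)
Require Import Defs.
From HB Require Import structures.
From mathcomp Require Import all_boot all_order all_algebra.
From mathcomp Require Import all_classical all_reals all_analysis.
From mathcomp Require Import ring lra zify.
Import Order.TTheory GRing.Theory Num.Theory.
Local Open Scope ring_scope.
Local Open Scope classical_set_scope.
Set Implicit Arguments. Unset Strict Implicit.

Section Real.
Variable R : realType.
Implicit Types a b c d u v K x z : R.

Lemma max_lip a b c d K : `|a - c| <= K -> `|b - d| <= K ->
  `|Num.max a b - Num.max c d| <= K.
Proof.
rewrite !ler_norml => /andP[h1 h2] /andP[h3 h4].
by case: (leP a b); case: (leP c d) => *; apply/andP; split; lra.
Qed.

Lemma pos_lip u v : `|pos_part u - pos_part v| <= `|u - v|.
Proof. by apply: max_lip => //; rewrite subrr normr0. Qed.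

Lemma pos_ge0 u : 0 <= pos_part u.
Proof. by rewrite /pos_part le_max lexx orbT. Qed.

Lemma wgt01 m j x : 0 <= wgt m j x <= 1.
Proof.
rewrite /wgt pos_ge0 /= /pos_part ge_max ler01 andbT.
by rewrite lerBlDr lerDl.
Qed.

Lemma wgt_lip m j x z : `|wgt m j x - wgt m j z| <= m%:R * `|x - z|.
Proof.
apply: le_trans (pos_lip _ _) _.
have -> : (1 - `|m%:R * x - j%:R|) - (1 - `|m%:R * z - j%:R|) =
  `|m%:R * z - j%:R| - `|m%:R * x - j%:R| by ring.
apply: le_trans (ler_dist_dist _ _) _.
have -> : m%:R * z - j%:R - (m%:R * x - j%:R) = m%:R * (z - x) by ring.
by rewrite normrM ger0_norm // distrC.
Qed.

Lemma wgt_supp m j x : 0 <= x -> wgt m j x != 0 ->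
  j = Num.trunc (m%:R * x) \/ j = (Num.trunc (m%:R * x)).+1.
Proof.
move=> x0 hw.
have mx0 : 0 <= m%:R * x by rewrite mulr_ge0.
have := truncn_itv mx0; set k := Num.trunc _ => /andP[hk1 hk2].
have hlt : `|m%:R * x - j%:R| < 1.
  move: hw; rewrite /wgt /pos_part.
  case: (leP (1 - `|m%:R * x - j%:R|) 0); first by rewrite eqxx.
  by rewrite subr_gt0.
move: hlt; rewrite ltr_norml => /andP[h1 h2].
have a1 : (j < k.+2)%N.
  by rewrite -(ltr_nat R) -!natr1; lra.
have a2 : (k <= j)%N.
  rewrite -ltnS -(ltr_nat R) -natr1; lra.
lia.
Qed.

Lemma sum_ind n k : \sum_(j < n) (((j : nat) == k)%:R : R) = (k < n)%N%:R.
Proof.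
elim: n => [|n IH]; first by rewrite big_ord0.
rewrite big_ord_recr /= IH.
have [h|h|->] := ltngtP k n.
- by rewrite ltnS (ltnW h) addr0.
- by rewrite ltnS leqNgt h addr0.
- by rewrite ltnSn add0r.
Qed.

Definition ind4 (k1 k2 j : nat) : R :=
  ((j == k1)%:R + (j == k1.+1)%:R) + ((j == k2)%:R + (j == k2.+1)%:R).

Lemma ind_ge0 (b : bool) : 0 <= (b%:R : R).
Proof. by case: b. Qed.

Lemma ind4_ge1 k1 k2 j : [|| j == k1, j == k1.+1, j == k2 | j == k2.+1] ->
  1 <= ind4 k1 k2 j.
Proof.
rewrite /ind4; case: (j == k1); case: (j == k1.+1); case: (j == k2);
  case: (j == k2.+1) => //= _; lra.
Qed.

Lemma sum_wgt_lip m x z : 0 <= x -> 0 <= z ->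
  \sum_(j < m.+1) `|wgt m j x - wgt m j z| <= 4 * m%:R * `|x - z|.
Proof.
move=> x0 z0.
set k1 := Num.trunc (m%:R * x); set k2 := Num.trunc (m%:R * z).
apply: (@le_trans _ _ (\sum_(j < m.+1) (m%:R * `|x - z|) * ind4 k1 k2 j)).
  apply: ler_sum => j _.
  have hI : 0 <= ind4 k1 k2 j by rewrite /ind4 !addr_ge0 ?ind_ge0.
  have hc : 0 <= m%:R * `|x - z| :> R by rewrite mulr_ge0.
  case: (boolP (wgt m j x != 0)) => [hx|].
    have : 1 <= ind4 k1 k2 j.
      by apply: ind4_ge1; case: (@wgt_supp m j x x0 hx) => ->; rewrite eqxx ?orbT.
    move=> h1; apply: le_trans (wgt_lip _ _ _ _) _.
    by rewrite -{1}(mulr1 (m%:R * _)) ler_wpM2l.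
  rewrite negbK => /eqP hx.
  case: (boolP (wgt m j z != 0)) => [hz|].
    have : 1 <= ind4 k1 k2 j.
      by apply: ind4_ge1; case: (@wgt_supp m j z z0 hz) => ->; rewrite eqxx ?orbT.
    move=> h1; apply: le_trans (wgt_lip _ _ _ _) _.
    by rewrite -{1}(mulr1 (m%:R * _)) ler_wpM2l.
  rewrite negbK => /eqP ->; rewrite hx subrr normr0 mulr_ge0 //.
rewrite -mulr_sumr (_ : 4 * m%:R * `|x - z| = m%:R * `|x - z| * 4); last by ring.
apply: ler_wpM2l; first by rewrite mulr_ge0.
rewrite /ind4 !big_split /= !sum_ind.
have h : forall b : bool, (b%:R : R) <= 1 by case.
by apply: le_trans (lerD (lerD (h _) (h _)) (lerD (h _) (h _))) _; lra.
Qed.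

Lemma term1 a b c : 0 <= a <= b ->
  b * pos_part ((if b == 0 then 0 else a / b) - c) = pos_part (a - c * b).
Proof.
case/andP=> a0 ab; have [bz|b0] := eqVneq b 0; first subst b.
  have -> : a = 0 by apply/le_anti; rewrite a0 ab.
  by rewrite mul0r /pos_part mulr0 subrr maxxx.
have bp : 0 < b by rewrite lt_neqAle eq_sym b0 (le_trans a0 ab).
rewrite /pos_part maxr_pMr ?ltW // mulr0 mulrBr mulrCA mulfV // mulr1 [b * c]mulrC.
by [].
Qed.

Lemma term2 a b c : 0 <= a <= b ->
  b * pos_part (c - (if b == 0 then 0 else a / b)) = pos_part (c * b - a).
Proof.
case/andP=> a0 ab; have [bz|b0] := eqVneq b 0; first subst b.
  have -> : a = 0 by apply/le_anti; rewrite a0 ab.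
  by rewrite mul0r /pos_part mulr0 subrr maxxx.
have bp : 0 < b by rewrite lt_neqAle eq_sym b0 (le_trans a0 ab).
rewrite /pos_part maxr_pMr ?ltW // mulr0 mulrBr mulrCA mulfV // mulr1 [b * c]mulrC.
by [].
Qed.

Lemma tdiff1 a1 b1 a2 b2 c D : 0 <= c <= 2 -> `|a1 - a2| <= D -> `|b1 - b2| <= D ->
  `|pos_part (a1 - c * b1) - pos_part (a2 - c * b2)| <= 3 * D.
Proof.
move=> /andP[c0 c2] ha hb; apply: le_trans (pos_lip _ _) _.
have -> : a1 - c * b1 - (a2 - c * b2) = (a1 - a2) - c * (b1 - b2) by ring.
apply: le_trans (ler_normB _ _) _; rewrite normrM (ger0_norm c0).
have : c * `|b1 - b2| <= 2 * D.
  apply: le_trans (ler_wpM2l c0 hb) _; apply: ler_wpM2r => //.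
  exact: le_trans (normr_ge0 _) hb.
lra.
Qed.

Lemma tdiff2 a1 b1 a2 b2 c D : 0 <= c <= 2 -> `|a1 - a2| <= D -> `|b1 - b2| <= D ->
  `|pos_part (c * b1 - a1) - pos_part (c * b2 - a2)| <= 3 * D.
Proof.
move=> /andP[c0 c2] ha hb; apply: le_trans (pos_lip _ _) _.
have -> : c * b1 - a1 - (c * b2 - a2) = c * (b1 - b2) - (a1 - a2) by ring.
apply: le_trans (ler_normB _ _) _; rewrite normrM (ger0_norm c0).
have : c * `|b1 - b2| <= 2 * D.
  apply: le_trans (ler_wpM2l c0 hb) _; apply: ler_wpM2r => //.
  exact: le_trans (normr_ge0 _) hb.
lra.
Qed.

Lemma bigmax_lip n (F1 F2 : 'I_n -> R) K : 0 <= K ->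
  (forall i, `|F1 i - F2 i| <= K) ->
  `|\big[Num.max/0]_(i < n) F1 i - \big[Num.max/0]_(i < n) F2 i| <= K.
Proof.
move=> K0 hF.
apply: (big_ind2 (fun u v => `|u - v| <= K)).
- by rewrite subrr normr0.
- by move=> *; exact: max_lip.
- by move=> i _; exact: hF.
Qed.
End Real.

Section Prob.
Variables (R : realType) (d : measure_display) (T : measurableType d)
  (P : probability T R).

Definition good (f : T -> R) := measurable_fun setT f /\ exists M, forall t, `|f t| <= M.

Lemma good_int f : good f -> P.-integrable setT (EFin \o f).
Proof.
case=> mf [M hM]; apply: measurable_bounded_integrable => //.
  by have h := @probability_setT _ _ _ P; rewrite [X in (X < _)%E]h ltry.
exists M; split; first exact: num_real.
move=> M0 hM0 t _ /=; apply: le_trans (hM t) _; exact: ltW.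
Qed.

Lemma good_cst c : good (fun _ => c).
Proof. by split; [exact: measurable_cst | exists `|c|]. Qed.

Lemma goodD f g : good f -> good g -> good (fun t => f t + g t).
Proof.
move=> [mf [M hM]] [mg [N hN]]; split; first exact: measurable_realfun.measurable_funD.
by exists (M + N) => t; apply: le_trans (ler_normD _ _) (lerD (hM t) (hN t)).
Qed.

Lemma goodB f g : good f -> good g -> good (fun t => f t - g t).
Proof.
move=> [mf [M hM]] [mg [N hN]]; split; first exact: measurable_realfun.measurable_funB.
by exists (M + N) => t; apply: le_trans (ler_normB _ _) (lerD (hM t) (hN t)).
Qed.

Lemma goodM f g : good f -> good g -> good (fun t => f t * g t).
Proof.
move=> [mf [M hM]] [mg [N hN]]; split; first exact: measurable_realfun.measurable_funM.
exists (M * N) => t; rewrite normrM; apply: ler_pM => //.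
Qed.

Lemma good_norm f : good f -> good (fun t => `|f t|).
Proof.
move=> [mf [M hM]]; split; first by apply: measurableT_comp => //; exact: measurable_realfun.normr_measurable.
by exists M => t; rewrite normr_id.
Qed.

Lemma good_wgt m j p : measurable_fun setT p -> good (fun t => wgt m j (p t)).
Proof.
move=> mp; split; last first.
  by exists 1 => t; have /andP[h0 h1] := @wgt01 R m j (p t); rewrite ger0_norm.
rewrite /wgt /pos_part.
apply: (measurable_realfun.measurable_maxr (f := fun t => 1 - `|m%:R * p t - j%:R|) (g := fun _ => 0)); last first.
  exact: measurable_cst.
apply: measurable_realfun.measurable_funB; first exact: measurable_cst.
apply: measurableT_comp; first exact: measurable_realfun.normr_measurable.
apply: measurable_realfun.measurable_funB; last exact: measurable_cst.
by apply: measurable_realfun.measurable_funM => //; exact: measurable_cst.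
Qed.

Lemma good_sum n (F : 'I_n -> T -> R) : (forall j, good (F j)) ->
  good (fun t => \sum_(j < n) F j t).
Proof.
move=> hF; elim: n F hF => [|n IH] F hF.
  by apply: (@eq_ind _ (fun _ => 0)) ; [exact: good_cst|apply: funext => t; rewrite big_ord0].
apply: (@eq_ind _ (fun t => \sum_(j < n) F (widen_ord (leqnSn n) j) t + F ord_max t)).
  by apply: goodD => //; apply: IH.
by apply: funext => t; rewrite big_ord_recr.
Qed.

Lemma E_D f g : good f -> good g -> Exp P (fun t => f t + g t) = Exp P f + Exp P g.
Proof. by move=> hf hg; rewrite /Exp RintegralD //; exact: good_int. Qed.

Lemma E_B f g : good f -> good g -> Exp P (fun t => f t - g t) = Exp P f - Exp P g.
Proof. by move=> hf hg; rewrite /Exp RintegralB //; exact: good_int. Qed.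

Lemma E_le f g : good f -> good g -> (forall t, f t <= g t) -> Exp P f <= Exp P g.
Proof. by move=> hf hg h; rewrite /Exp le_Rintegral //; exact: good_int. Qed.

Lemma E_norm f : good f -> `|Exp P f| <= Exp P (fun t => `|f t|).
Proof. by move=> hf; rewrite /Exp le_normr_Rintegral //; exact: good_int. Qed.

Lemma E_ge0 f : (forall t, 0 <= f t) -> 0 <= Exp P f.
Proof. by move=> h; apply: Rintegral_ge0. Qed.

Lemma E_Z c f : good f -> Exp P (fun t => c * f t) = c * Exp P f.
Proof. by move=> hf; rewrite /Exp RintegralZl //; exact: good_int. Qed.

Lemma E_sum n (F : 'I_n -> T -> R) : (forall j, good (F j)) ->
  Exp P (fun t => \sum_(j < n) F j t) = \sum_(j < n) Exp P (F j).
Proof.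
elim: n F => [|n IH] F hF.
  rewrite big_ord0 (_ : (fun t => _) = fun _ => 0); last first.
    by apply: funext => t; rewrite big_ord0.
  by rewrite /Exp Rintegral_cst // mul0r.
transitivity (Exp P (fun t => \sum_(j < n) F (widen_ord (leqnSn n) j) t + F ord_max t)).
  by congr Exp; apply: funext => t; rewrite big_ord_recr.
rewrite E_D //; last by apply: good_sum => j; exact: hF.
by rewrite IH // big_ord_recr.
Qed.

End Prob.

Lemma filt_le (R : realType) n (Q : pred 'I_n) (G : 'I_n -> R) :
  (forall j, 0 <= G j) -> \sum_(j < n | Q j) G j <= \sum_(j < n) G j.
Proof.
move=> hG; rewrite [X in _ <= X](bigID Q) /= lerDl.
by apply: sumr_ge0 => j _; exact: hG.
Qed.

Lemma sum_diff (R : realType) n (Q : pred 'I_n) (F1 F2 G : 'I_n -> R) :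
  (forall j, `|F1 j - F2 j| <= 3 * G j) -> (forall j, 0 <= G j) ->
  `|\sum_(j < n | Q j) F1 j - \sum_(j < n | Q j) F2 j| <= 3 * \sum_(j < n) G j.
Proof.
move=> hF hG; rewrite -sumrB; apply: le_trans (ler_norm_sum _ _ _) _.
apply: le_trans (ler_sum _ (fun j _ => hF j)) _.
rewrite -mulr_sumr; apply: ler_wpM2l => //.
by apply: filt_le.
Qed.

Section Main.
Variables (R : realType) (d : measure_display) (T : measurableType d)
  (P : probability T R) (p1 p2 y : T -> R) (m : nat).
Hypotheses (mp1 : measurable_fun setT p1) (mp2 : measurable_fun setT p2)
  (my : measurable_fun setT y) (hp1 : forall t, 0 <= p1 t <= 1)
  (hp2 : forall t, 0 <= p2 t <= 1) (hy : forall t, y t = 0 \/ y t = 1)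
  (hm : (0 < m)%N).

Definition aa p (j : nat) := Exp P (fun t => wgt m j (p t) * y t).
Definition DD (j : nat) := fun t => `|wgt m j (p1 t) - wgt m j (p2 t)|.

Lemma good_y : good y.
Proof. by split => //; exists 1 => t; case: (hy t) => ->; rewrite ?normr0 ?normr1. Qed.

Lemma y01 t : 0 <= y t <= 1.
Proof. by case: (hy t) => ->; rewrite lexx ler01. Qed.

Lemma ab_bounds p j : measurable_fun setT p -> 0 <= aa p j <= pi_ P p m j.
Proof.
move=> mp; apply/andP; split.
  apply: (E_ge0 P) => t; apply: mulr_ge0.
  - by have /andP[] := @wgt01 R m j (p t).
  - by have /andP[] := y01 t.
apply: (E_le P); [apply: goodM; [exact: good_wgt|exact: good_y]|exact: good_wgt|].
move=> t; have /andP[h0 h1] := @wgt01 R m j (p t); have /andP[y0 y1] := y01 t.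
by rewrite -{2}(mulr1 (wgt m j (p t))) ler_wpM2l.
Qed.

Lemma da j : `|aa p1 j - aa p2 j| <= Exp P (DD j).
Proof.
have g1 := good_wgt m j mp1; have g2 := good_wgt m j mp2.
rewrite /aa -E_B; [|exact: goodM g1 good_y|exact: goodM g2 good_y].
apply: le_trans (E_norm P _) _; first by apply: goodB; apply: goodM => //; exact: good_y.
apply: (E_le P).
- by apply: good_norm; apply: goodB; apply: goodM => //; exact: good_y.
- by apply: good_norm; exact: goodB.
move=> t; rewrite -mulrBl normrM; have /andP[y0 y1] := y01 t.
by rewrite -[X in _ <= X]mulr1 ler_wpM2l // ger0_norm.
Qed.

Lemma db j : `|pi_ P p1 m j - pi_ P p2 m j| <= Exp P (DD j).
Proof.
have g1 := good_wgt m j mp1; have g2 := good_wgt m j mp2.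
rewrite /pi_ -E_B //; apply: le_trans (E_norm P _) _; first exact: goodB.
by apply: (E_le P) => //; apply: good_norm; exact: goodB.
Qed.

Lemma termE1 p j c : measurable_fun setT p ->
  pi_ P p m j * pos_part (q_ P p y m j - c) = pos_part (aa p j - c * pi_ P p m j).
Proof. by move=> mp; rewrite /q_; apply: term1; exact: ab_bounds. Qed.

Lemma termE2 p j c : measurable_fun setT p ->
  pi_ P p m j * pos_part (c - q_ P p y m j) = pos_part (c * pi_ P p m j - aa p j).
Proof. by move=> mp; rewrite /q_; apply: term2; exact: ab_bounds. Qed.


Lemma sumE1 p (Q : pred 'I_m.+1) c : measurable_fun setT p ->
  \sum_(j < m.+1 | Q j) pi_ P p m j * pos_part (q_ P p y m j - c) =
  \sum_(j < m.+1 | Q j) pos_part (aa p j - c * pi_ P p m j).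
Proof. by move=> mp; apply: eq_bigr => j _; exact: termE1. Qed.

Lemma sumE2 p (Q : pred 'I_m.+1) c : measurable_fun setT p ->
  \sum_(j < m.+1 | Q j) pi_ P p m j * pos_part (c - q_ P p y m j) =
  \sum_(j < m.+1 | Q j) pos_part (c * pi_ P p m j - aa p j).
Proof. by move=> mp; apply: eq_bigr => j _; exact: termE2. Qed.

Lemma c_bound1 (i : 'I_m.+1) : 0 <= (i.+1%:R / m%:R : R) <= 2.
Proof.
have m0 : 0 < m%:R :> R by rewrite ltr0n.
apply/andP; split; first by apply: divr_ge0; [exact: ler0n | exact: ltW].
rewrite ler_pdivrMr //.
have -> : 2 * m%:R = (2 * m)%:R :> R by rewrite natrM.
by rewrite ler_nat; have := ltn_ord i; lia.
Qed.

Lemma c_bound2 (i : 'I_m.+1) : 0 <= (i%:R / m%:R : R) <= 2.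
Proof.
have m0 : 0 < m%:R :> R by rewrite ltr0n.
apply/andP; split; first by apply: divr_ge0; [exact: ler0n | exact: ltW].
rewrite ler_pdivrMr //.
have -> : 2 * m%:R = (2 * m)%:R :> R by rewrite natrM.
by rewrite ler_nat; have := ltn_ord i; lia.
Qed.

Lemma ED_ge0 j : 0 <= Exp P (DD j).
Proof. by apply: (E_ge0 P) => t; exact: normr_ge0. Qed.

Lemma S_bound (i : 'I_m.+1) :
  `| (\sum_(j < m.+1 | (j <= i)%N)
         pi_ P p1 m j * pos_part (q_ P p1 y m j - (i.+1)%:R / m%:R)
    + \sum_(j < m.+1 | (i < j)%N)
         pi_ P p1 m j * pos_part (i%:R / m%:R - q_ P p1 y m j))
   - (\sum_(j < m.+1 | (j <= i)%N)
         pi_ P p2 m j * pos_part (q_ P p2 y m j - (i.+1)%:R / m%:R)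
    + \sum_(j < m.+1 | (i < j)%N)
         pi_ P p2 m j * pos_part (i%:R / m%:R - q_ P p2 y m j)) |
  <= 6 * \sum_(j < m.+1) Exp P (DD j).
Proof.
rewrite !sumE1 // !sumE2 // opprD addrACA.
apply: le_trans (ler_normD _ _) _.
rewrite (_ : 6 * _ = 3 * \sum_(j < m.+1) Exp P (DD j) + 3 * \sum_(j < m.+1) Exp P (DD j)); last by ring.
apply: lerD; apply: sum_diff => j; try exact: ED_ge0.
- by apply: tdiff1; [exact: c_bound1|exact: da|exact: db].
- by apply: tdiff2; [exact: c_bound2|exact: da|exact: db].
Qed.

Lemma final_bound :
  `|SCDL P p1 y m - SCDL P p2 y m| <= 24 * m%:R * Exp P (fun t => `|p1 t - p2 t|).
Proof.
have gD : forall j, good (DD j).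
  by move=> j; apply: good_norm; apply: goodB; exact: good_wgt.
have gp : good (fun t => `|p1 t - p2 t|).
  by apply: good_norm; apply: goodB; split => //; exists 1 => t;
    [have /andP[a b] := hp1 t | have /andP[a b] := hp2 t]; rewrite ger0_norm.
have key : 6 * \sum_(j < m.+1) Exp P (DD j) <=
    24 * m%:R * Exp P (fun t => `|p1 t - p2 t|).
  rewrite -(E_sum P (F := fun (j : 'I_m.+1) => DD j)) //.
  have h : Exp P (fun t => \sum_(j < m.+1) DD j t) <=
      Exp P (fun t => (4 * m%:R) * `|p1 t - p2 t|).
    apply: (E_le P).
    - by apply: good_sum.
    - by apply: goodM => //; exact: good_cst.
    move=> t; apply: sum_wgt_lip.
    + by have /andP[] := hp1 t.
    + by have /andP[] := hp2 t.
  rewrite E_Z // in h.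
  rewrite (_ : 24 * m%:R * _ = 6 * (4 * m%:R * Exp P (fun t => `|p1 t - p2 t|))); last by ring.
  by apply: ler_wpM2l.
rewrite /SCDL; apply: le_trans key; apply: bigmax_lip.
  by rewrite mulr_ge0 // sumr_ge0 // => j _; exact: ED_ge0.
by move=> i; exact: S_bound.
Qed.
End Main.

Unset Implicit Arguments.
Theorem lemma5p2 (R : realType) :
  exists C : R, 0 < C /\
  forall (d : measure_display) (T : measurableType d) (P : probability T R)
         (p1 p2 y : T -> R),
    measurable_fun setT p1 -> measurable_fun setT p2 -> measurable_fun setT y ->
    (forall t, 0 <= p1 t <= 1) -> (forall t, 0 <= p2 t <= 1) ->
    (forall t, y t = 0 \/ y t = 1) ->
    forall m : nat, (0 < m)%N ->
      `|SCDL P p1 y m - SCDL P p2 y m|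
        <= C * m%:R * Exp P (fun t => `|p1 t - p2 t|).
Proof.
exists 24; split => // d T P p1 p2 y mp1 mp2 my hp1 hp2 hy m hm.
by apply: final_bound.
Qed.
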